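(* Let $k\ge 3$ and let $V$ be a finite subset of $\mathbb R$ that is optimal for $k$-term arithmetic progressions. Let $(V_1<V_2<\cdots<V_{k-1})$ be a $\le$-orderly, balanced $(k-1)$-decomposition of $V$. Then both $\bigcup_{j=1}^{k-2}V_j$ and $\bigcup_{j=2}^{k-1}V_j$ are optimal for $(k-1)$-term arithmetic progressions.
   Context: A $k$-term arithmetic progression is a set $\{a,a+d,\dots,a+(k-1)d\}\subseteq\mathbb R$ with $d>0$; $S_{\mathcal A_k}(V)$ is the number of them contained in $V$. An $m$-set $V$ is optimal for $k$-term arithmetic progressions if $S_{\mathcal A_k}(V)$ equals the maximum of $S_{\mathcal A_k}(W)$ over all $m$-subsets $W\subseteq\mathbb R$, namely $(m-r)(m+r-k+1)/(2k-2)$ with $r$ the remainder of $m$ modulo $k-1$. For $A,B\subseteq\mathbb R$, $A<B$ means $a<b$ for all $a\in A$, $b\in B$. A $\le$-orderly $\ell$-decomposition of $V$ is a family $(V_1,\dots,V_\ell)$ of pairwise disjoint, possibly empty subsets with union $V$ such that $V_1<V_2<\cdots<V_\ell$; it is balanced if each $V_i$ has $\lfloor |V|/\ell\rfloor$ or $\lceil |V|/\ell\rceil$ elements. *)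

(* Defs.v *)
(* Finite subsets of the real line are modelled as
   duplicate-free sequences over an arbitrary real field R. *)
From HB Require Import structures.
From mathcomp Require Import all_boot all_order all_algebra.
Set Implicit Arguments. Unset Strict Implicit. Unset Printing Implicit Defensive.
Import Order.TTheory GRing.Theory Num.Theory.
Local Open Scope ring_scope.

(* S_{A_k}(V): number of k-term APs {a, a+d, ..., a+(k-1)d}, d > 0, contained
   in V.  Such an AP is identified with its parameters (a, d); we enumerate
   a = first term in V and d = b - a with b (second term) in V, b > a. *)
Definition numAP (R : realFieldType) (k : nat) (V : seq R) : nat :=
  count (fun p : R * R =>
           (p.1 < p.2) && all (fun i : nat => p.1 + i%:R * (p.2 - p.1) \in V) (iota 0 k))
        [seq (a, b) | a <- V, b <- V].

Definition optimalAP (R : realFieldType) (k : nat) (V : seq R) : Prop :=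
  uniq V /\ forall W : seq R, uniq W -> size W = size V -> (numAP k W <= numAP k V)%N.

(* (Vs 0, ..., Vs (l-1)) is a <=-orderly l-decomposition of V
   (indices shifted by one w.r.t. the paper: Vs i is V_{i+1}). *)
Definition orderly_decomp (R : realFieldType) (l : nat) (V : seq R) (Vs : nat -> seq R) : Prop :=
  [/\ forall i, (i < l)%N -> uniq (Vs i),
      forall i j, (i < j)%N -> (j < l)%N -> forall x y, x \in Vs i -> y \in Vs j -> x < y
      (* disjointness follows from the ordering condition *)
    & V =i flatten [seq Vs i | i <- iota 0 l] ].

Definition balanced_decomp (R : realFieldType) (l : nat) (V : seq R) (Vs : nat -> seq R) : Prop :=
  forall i, (i < l)%N ->
    size (Vs i) = (size V %/ l)%N \/ size (Vs i) = ((size V + l.-1) %/ l)%N.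

(* Main.v *)
Require Import Defs.
From HB Require Import structures.
From mathcomp Require Import all_boot all_order all_algebra.
From mathcomp Require Import ring lra zify.
Import Order.TTheory GRing.Theory Num.Theory.
Definition Fc (c m : nat) : nat := c * 'C(m %/ c, 2) + (m %% c) * (m %/ c).

Lemma Fqr c q r : 0 < c -> r <= c -> Fc c (q * c + r) = c * 'C(q, 2) + r * q.
Proof.
move=> c0; rewrite leq_eqVlt => /orP[/eqP -> | rc].
  by rewrite /Fc -mulSnr mulnK // modnMl binS bin1 mul0n addn0 mulnDr.
by rewrite /Fc divnMDl // modnMDl divn_small // modn_small // addn0.
Qed.

Lemma Fc_sum c m : 0 < c -> sumn [seq j %/ c | j <- iota 0 m] = Fc c m.
Proof.
move=> c0; elim: m => [|m IH]; first by rewrite /Fc div0n mod0n bin0n /= muln0.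
rewrite -addn1 iotaD map_cat sumn_cat IH /= addn0 add0n.
have rc := ltn_pmod m c0.
move: (divn_eq m c) rc; set q := m %/ c; set r := m %% c => em rc.
rewrite em -addnA !Fqr // ?(ltnW rc) //; lia.
Qed.

Lemma Fc_rec n m b : 0 < n ->
  (b = m %/ n.+1 \/ b = (m + n) %/ n.+1) ->
  Fc n.+1 m = Fc n (m - b) + 'C(b, 2).
Proof.
move=> n0 hb.
have rc := ltn_pmod m (ltn0Sn n).
move: (divn_eq m n.+1) rc hb; set q := m %/ n.+1; set r := m %% n.+1 => em rc hb.
have caseq : b = q -> Fc n.+1 m = Fc n (m - b) + 'C(b, 2).
  move=> ->; rewrite em.
  have -> : q * n.+1 + r - q = q * n + r by rewrite mulnS; lia.
  rewrite !Fqr //; lia.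
case: hb => hb; first exact: caseq.
case: r em rc hb => [|r] em rc hb.
  apply: caseq; rewrite hb em addn0 divnMDl // divn_small //; lia.
have eb : b = q.+1.
  rewrite hb em. have -> : q * n.+1 + r.+1 + n = q.+1 * n.+1 + r by rewrite mulSnr; lia.
  rewrite divnMDl // divn_small //; lia.
rewrite em eb.
have -> : q * n.+1 + r.+1 - q.+1 = q * n + r by rewrite mulnS; lia.
rewrite !Fqr // ?binS ?bin1; lia.
Qed.

Local Open Scope ring_scope.
Lemma count_inj (T1 T2 : eqType) (s : seq T1) (t : seq T2) (P : pred T1) (Q : pred T2) (f : T1 -> T2) :
  uniq s -> {in [seq x <- s | P x] &, injective f} ->
  (forall x, x \in s -> P x -> (f x \in t) && Q (f x)) -> (count P s <= count Q t)%N.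
Proof.
move=> us inj H; rewrite -!size_filter -(size_map f); apply: uniq_leq_size.
  by rewrite map_inj_in_uniq // filter_uniq.
move=> y /mapP [x]; rewrite mem_filter => /andP[Px xs] ->.
by rewrite mem_filter; case/andP: (H x xs Px) => -> ->.
Qed.

Lemma count_split (T : Type) (P Q : pred T) (s : seq T) :
  count P s = (count (fun x => P x && Q x) s + count (fun x => P x && ~~ Q x) s)%N.
Proof. elim: s => //= x s ->; case: (P x); case: (Q x) => /=; lia. Qed.

Lemma uniq_pairs (T : eqType) (s : seq T) : uniq s -> uniq [seq (x, y) | x <- s, y <- s].
Proof. by move=> us; apply: allpairs_uniq => // [[? ?] [? ?]]. Qed.

Lemma numAP_split_top (R : realFieldType) n (V V1 B : seq R) : (1 <= n)%N -> uniq V ->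
  V =i V1 ++ B -> (forall x y, x \in V1 -> y \in B -> x < y) ->
  (numAP n.+2 V <= numAP n.+1 V1 + numAP 2 B)%N.
Proof.
move=> n1 uV eV ord; rewrite /numAP.
rewrite (count_split _ _ (fun p : R * R => p.1 + n%:R * (p.2 - p.1) \in V1)).
apply: leq_add.
  apply: (@count_inj _ _ _ _ _ _ (fun p => p)) => //; first exact: uniq_pairs.
  move=> [a b] _ /andP[/andP[ab /allP H] u1].
  have dpos : 0 < b - a by rewrite subr_gt0.
  have inV1 : forall i, (i < n.+1)%N -> a + i%:R * (b - a) \in V1.
    move=> i ilt.
    have : a + i%:R * (b - a) \in V by apply: H; rewrite mem_iota /=; lia.
    rewrite eV mem_cat => /orP[] // zB.
    have := ord _ _ u1 zB; rewrite ltrD2l ltr_pM2r // ltr_nat; lia.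
  apply/andP; split.
    apply: allpairs_f.
      by have := inV1 0%N isT; rewrite mul0r addr0.
    by have := inV1 1%N (n1 : (1 < n.+1)%N); rewrite mul1r addrC subrK.
  apply/andP; split => //; apply/allP => i; rewrite mem_iota => ilt; apply: inV1; lia.
have E : forall a b : R, (a + n.+1%:R * (b - a)) - (a + n%:R * (b - a)) = b - a.
  by move=> a b; rewrite -addn1 natrD; ring.
apply: (@count_inj _ _ _ _ _ _ (fun p => (p.1 + n%:R * (p.2 - p.1), p.1 + n.+1%:R * (p.2 - p.1)))); first exact: uniq_pairs.
  move=> [a b] [a' b'] _ _ /= [e1 e2].
  have d : b - a = b' - a' by rewrite -E e1 e2 E.
  have ea : a = a' by move: e1; rewrite d => /addIr.
  by move: d; rewrite ea => /addIr ->.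
move=> [a b] _ /andP[/andP[ab /allP H] u1].
have dpos : 0 < b - a by rewrite subr_gt0.
set u := a + n%:R * (b - a); set v := a + n.+1%:R * (b - a).
have uv : u < v by rewrite ltrD2l ltr_pM2r // ltr_nat.
have uB : u \in B.
  have : u \in V by apply: H; rewrite mem_iota /=; lia.
  by rewrite eV mem_cat (negbTE u1).
have vB : v \in B.
  have : v \in V by apply: H; rewrite mem_iota /=; lia.
  rewrite eV mem_cat => /orP[] // v1.
  by have := ord _ _ v1 uB; rewrite ltNge (ltW uv).
rewrite allpairs_f //= uv /= mul0r addr0 uB mul1r addrC subrK vB.
done.
Qed.

Lemma numAP_split_bot (R : realFieldType) n (V B V2 : seq R) : (1 <= n)%N -> uniq V ->
  V =i B ++ V2 -> (forall x y, x \in B -> y \in V2 -> x < y) ->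
  (numAP n.+2 V <= numAP n.+1 V2 + numAP 2 B)%N.
Proof.
move=> n1 uV eV ord; rewrite /numAP.
rewrite (count_split _ _ (fun p : R * R => p.2 \in B)) addnC.
apply: leq_add; last first.
  apply: (@count_inj _ _ _ _ _ _ (fun p => p)) => //; first exact: uniq_pairs.
  move=> [a b] _ /andP[/andP[ab /allP H] bB].
  have aB : a \in B.
    have : a \in V by have := H 0%N; rewrite mem_iota mul0r addr0; apply; lia.
    rewrite eV mem_cat => /orP[] // aV2.
    by have := ord _ _ bB aV2; rewrite ltNge (ltW ab).
  by rewrite allpairs_f //= ab /= mul0r addr0 aB mul1r addrC subrK bB.
apply: (@count_inj _ _ _ _ _ _ (fun p => (p.2, p.2 + (p.2 - p.1)))); first exact: uniq_pairs.
  move=> [a b] [a' b'] _ _ /= [e1 e2].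
  by move: e2; rewrite e1 => /addrI/addrI/oppr_inj ->.
move=> [a b] _ /andP[/andP[ab /allP H] bB].
have dpos : 0 < b - a by rewrite subr_gt0.
have bV2 : b \in V2.
  have : b \in V by have := H 1%N; rewrite mem_iota mul1r addrC subrK; apply; lia.
  by rewrite eV mem_cat (negbTE bB).
have inV2 : forall i, (i < n.+1)%N -> b + i%:R * (b + (b - a) - b) \in V2.
  move=> i ilt.
  have -> : b + i%:R * (b + (b - a) - b) = a + i.+1%:R * (b - a).
    by rewrite -addn1 natrD; ring.
  have : a + i.+1%:R * (b - a) \in V by apply: H; rewrite mem_iota /=; lia.
  rewrite eV mem_cat => /orP[] // zB.
  have := ord _ _ zB bV2.
  rewrite -{2}(subrK a b) (addrC (b - a)) ltrD2l -{2}(mul1r (b - a)) ltr_pM2r //.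
  by rewrite ltrn1.
apply/andP; split.
  apply: allpairs_f.
    by have := inV2 0%N isT; rewrite mul0r addr0.
  by have := inV2 1%N (n1 : (1 < n.+1)%N); rewrite mul1r addrC subrK.
apply/andP; split; first by rewrite ltrDl. apply/allP => i; rewrite mem_iota => ilt; apply: inV2; lia.
Qed.
Lemma count_allpairs (T1 T2 : Type) (P : pred (T1 * T2)) (s : seq T1) (t : seq T2) :
  count P [seq (x, y) | x <- s, y <- t] = sumn [seq count (fun y => P (x, y)) t | x <- s].
Proof. by elim: s => // x s IH; rewrite allpairs_cons count_cat count_map IH. Qed.

Lemma sumn_mapD (T : Type) (f g : T -> nat) (s : seq T) :
  sumn [seq (f x + g x)%N | x <- s] = (sumn (map f s) + sumn (map g s))%N.
Proof. elim: s => //= x s ->; lia. Qed.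

Lemma sumn_map_le (T : Type) (f g : T -> nat) (s : seq T) :
  (forall x, f x <= g x)%N -> (sumn (map f s) <= sumn (map g s))%N.
Proof. by move=> H; elim: s => //= x s IH; apply: leq_add. Qed.

Lemma cnt_lt (R : realFieldType) (s : seq R) : uniq s ->
  sumn [seq count (fun y => x < y) s | x <- s] = 'C(size s, 2).
Proof.
elim: s => //= x s IH /andP[xs us].
rewrite ltxx add0n.
rewrite (eq_map (fun x0 => erefl _ : count (fun y => x0 < y) (x :: s) = (((x0 < x)%R : nat) + count (fun y => (x0 < y)%R) s)%N)).
rewrite sumn_mapD IH // sumn_count binS bin1.
suff E : (count (fun y => (x < y)%R) s + count (fun x0 => (x0 < x)%R) s)%N = size s by rewrite addnA E addnC.
rewrite -(count_predC (fun y => x < y)); congr (_ + _)%N.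
apply: eq_in_count => y ys /=; rewrite -leNgt le_eqVlt.
by have -> : (y == x) = false by apply/eqP => e; move: xs; rewrite -e ys.
Qed.

Lemma numAP2 (R : realFieldType) (B : seq R) : uniq B -> (numAP 2 B <= 'C(size B, 2))%N.
Proof.
move=> uB; rewrite -cnt_lt // /numAP count_allpairs.
apply: sumn_map_le => x; by apply: sub_count => y /andP[].
Qed.

Lemma aux_lt (j d i n m : nat) : (i * d <= n * d)%N -> (n * d <= j)%N -> (j < m)%N -> (j - n * d + i * d < 0 + m)%N.
Proof. lia. Qed.

Lemma numAP_interval (R : realFieldType) n m : (0 < n)%N ->
  (Fc n m <= numAP n.+1 [seq (i%:R : R) | i <- iota 0 m])%N.
Proof.
move=> n0; rewrite -Fc_sum //.
set s := [seq (j, d) | j <- iota 0 m, d <- iota 1 (j %/ n)].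
have -> : sumn [seq (j %/ n)%N | j <- iota 0 m] = count predT s.
  by rewrite count_predT size_allpairs_dep; congr sumn; apply: eq_map => j; rewrite size_iota.
have mems : forall p, p \in s -> [/\ (0 < p.2)%N, (n * p.2 <= p.1)%N & (p.1 < m)%N].
  move=> p /allpairsPdep [j [d [jm dm ->]]]; move: jm dm; rewrite !mem_iota /= => jm dm.
  split; try lia. have : (d <= j %/ n)%N by lia.
  by rewrite leq_divRL // mulnC.
rewrite /numAP.
apply: (@count_inj _ _ _ _ _ _ (fun p => (((p.1 - n * p.2)%N%:R : R), ((p.1 - n * p.2 + p.2)%N%:R : R)))).
- apply: allpairs_uniq_dep; first exact: iota_uniq.
    by move=> j _; exact: iota_uniq.
  by move=> [j d] [j' d'] _ _ /= [e1 e2]; subst.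
- move=> [j d] [j' d']; rewrite !mem_filter /= => /mems [d0 dj jm] /mems [d0' dj' jm'] [].
  move/eqP; rewrite eqr_nat => /eqP e1; move/eqP; rewrite eqr_nat => /eqP e2.
  rewrite /= in d0 dj jm d0' dj' jm'.
  have ed : d = d' by lia.
  subst d'; congr (_, _); lia.
move=> [j d] /mems [d0 dj jm] _; rewrite /= in d0 dj jm.
set x := (j - n * d)%N.
have inI : forall i, (i <= n)%N -> (x%:R : R) + i%:R * ((x + d)%N%:R - x%:R) \in [seq (i%:R : R) | i <- iota 0 m].
  move=> i iln.
  have -> : (x%:R : R) + i%:R * ((x + d)%N%:R - x%:R) = (x + i * d)%N%:R.
    by rewrite !natrD natrM; ring.
  apply: map_f; rewrite mem_iota /=.
  have : (i * d <= n * d)%N by apply: leq_mul.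
  by move=> h; rewrite /x; apply: aux_lt h dj jm.
apply/andP; split.
  apply: allpairs_f.
    by have := inI 0%N isT; rewrite mul0r addr0.
  by have := inI 1%N n0; rewrite mul1r addrC subrK.
apply/andP; split; first by rewrite ltr_nat /= -[X in (X < _)%N]addn0 ltn_add2l.
apply/allP => i; rewrite mem_iota => ilt; apply: inI; lia.
Qed.

Lemma sort_split (R : realFieldType) (V : seq R) t : uniq V ->
  let s := sort <=%R V in
  [/\ V =i take t s ++ drop t s, uniq (take t s),
      (forall x y, x \in take t s -> y \in drop t s -> x < y) & size s = size V].
Proof.
move=> uV s.
have ps : perm_eq s V by rewrite /s perm_sort.
have us : uniq s by rewrite /s sort_uniq.
have pw : pairwise <%R s by rewrite -lt_sorted_pairwise /s sort_lt_sorted.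
split.
- by move=> x; rewrite cat_take_drop (perm_mem ps).
- exact: take_uniq.
- move: pw; rewrite -(cat_take_drop t s) pairwise_cat => /and3P[/allrelP H _ _].
  by move=> x y; rewrite !cat_take_drop => hx hy; apply: H.
- exact: perm_size.
Qed.

Lemma upper_bound (R : realFieldType) n (V : seq R) : (0 < n)%N -> uniq V ->
  (numAP n.+1 V <= Fc n (size V))%N.
Proof.
elim: n V => [//|n IH] V _ uV.
case: n IH => [|n] IH.
  rewrite /Fc divn1 modn1 mul1n mul0n addn0; exact: numAP2.
set m := size V; set b := (m %/ n.+2)%N.
have [eV uV1 ord ss] := @sort_split _ V (m - b)%N uV.
set s := sort _ V in eV uV1 ord ss.
set t := (m - b)%N in eV uV1 ord.
have bm : (b <= m)%N by apply: leq_div.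
apply: leq_trans (@numAP_split_top _ n.+1 V _ _ isT uV eV ord) _.
rewrite (@Fc_rec n.+1 m b) //; last by left.
apply: leq_add.
  have -> : (m - b)%N = size (take t s) by rewrite size_takel // ss leq_subr.
  exact: IH.
have -> : b = size (drop t s) by rewrite size_drop ss /t /m; lia.
apply: numAP2; rewrite drop_uniq // /s sort_uniq //.
Qed.

Lemma flat_mem (T : eqType) (Vs : nat -> seq T) a c x :
  x \in flatten [seq Vs j | j <- iota a c] -> exists2 j, (a <= j < a + c)%N & x \in Vs j.
Proof. by move/flatten_mapP => [j]; rewrite mem_iota => ? ?; exists j. Qed.

Lemma flat_uniq (R : realFieldType) (Vs : nat -> seq R) l a c :
  (forall i, (i < l)%N -> uniq (Vs i)) ->
  (forall i j, (i < j)%N -> (j < l)%N -> forall x y, x \in Vs i -> y \in Vs j -> x < y) ->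
  (a + c <= l)%N -> uniq (flatten [seq Vs j | j <- iota a c]).
Proof.
move=> Hu Ho; elim: c a => [//|c IH] a ac /=.
rewrite cat_uniq Hu; last by lia.
rewrite IH; last by lia.
rewrite andbT; apply/hasPn => y /flat_mem [j jr yj]; apply/negP => ya.
by have := Ho a j ltac:(lia) ltac:(lia) y y ya yj; rewrite ltxx.
Qed.

Lemma interval_ok (R : realFieldType) m :
  uniq [seq (i%:R : R) | i <- iota 0 m] /\ size [seq (i%:R : R) | i <- iota 0 m] = m.
Proof.
split; last by rewrite size_map size_iota.
rewrite map_inj_uniq ?iota_uniq // => x y /eqP; by rewrite eqr_nat => /eqP.
Qed.

Theorem mainTheorem10 (R : realFieldType) (k : nat) (V : seq R) (Vs : nat -> seq R) :
  (3 <= k)%N ->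
  optimalAP k V ->
  orderly_decomp k.-1 V Vs ->
  balanced_decomp k.-1 V Vs ->
  optimalAP k.-1 (flatten [seq Vs j | j <- iota 0 k.-2]) /\
  optimalAP k.-1 (flatten [seq Vs j | j <- iota 1 k.-2]).
Proof.
move=> k3 [uV opt] [uVs ordVs eV] bal.
case: k k3 opt uVs ordVs eV bal => [|[|[|n]]] // _ opt uVs ordVs eV bal.
change (optimalAP n.+2 (flatten [seq Vs j | j <- iota 0 n.+1]) /\ optimalAP n.+2 (flatten [seq Vs j | j <- iota 1 n.+1])).
set F := flatten _ in eV.
have uF : uniq F by apply: (@flat_uniq _ Vs n.+2 0 n.+2 uVs ordVs).
have sF : size V = size F by apply: perm_size; apply: uniq_perm.
set m := size V in sF.
have [uI sI] := interval_ok R m.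
have low : (Fc n.+2 m <= numAP n.+3 V)%N.
  apply: leq_trans (@numAP_interval R n.+2 m isT) _.
  by apply: opt.
have n1 : (0 < n.+1)%N by [].
split.
- set V1 := flatten [seq Vs j | j <- iota 0 n.+1].
  set B := Vs n.+1.
  have eF : F = V1 ++ B.
    have e : iota 0 n.+2 = iota 0 n.+1 ++ iota n.+1 1 by rewrite -iotaD addn1.
    by rewrite /F e map_cat flatten_cat /= cats0.
  have uV1 : uniq V1 by move: uF; rewrite eF cat_uniq => /andP[].
  have eV' : V =i V1 ++ B by move=> x; rewrite eV eF.
  have ord : forall x y, x \in V1 -> y \in B -> x < y.
    move=> x y /flat_mem [j jr xj] yB.
    by apply: (ordVs j n.+1) xj yB; lia.
  have sp := @numAP_split_top _ n.+1 V V1 B n1 uV eV' ord.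
  have b2 : (numAP 2 B <= 'C(size B, 2))%N := @numAP2 R _ (uVs n.+1 (ltnSn _)).
  have hb : size B = (m %/ n.+2)%N \/ size B = ((m + n.+1) %/ n.+2)%N by apply: bal.
  have rec := @Fc_rec n.+1 m (size B) n1 hb.
  have sV1 : size V1 = (m - size B)%N by rewrite sF eF size_cat; lia.
  split => // W uW sW.
  apply: leq_trans (@upper_bound R n.+1 W n1 uW) _.
  rewrite sW sV1; lia.
- set V2 := flatten [seq Vs j | j <- iota 1 n.+1].
  set B := Vs 0.
  have eF : F = B ++ V2 by [].
  have uV2 : uniq V2 by move: uF; rewrite eF cat_uniq => /and3P[].
  have eV' : V =i B ++ V2 by move=> x; rewrite eV eF.
  have ord : forall x y, x \in B -> y \in V2 -> x < y.
    move=> x y xB /flat_mem [j jr yj].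
    by apply: (ordVs 0%N j) xB yj; lia.
  have sp := @numAP_split_bot _ n.+1 V B V2 n1 uV eV' ord.
  have b2 : (numAP 2 B <= 'C(size B, 2))%N := @numAP2 R _ (uVs 0%N isT).
  have hb : size B = (m %/ n.+2)%N \/ size B = ((m + n.+1) %/ n.+2)%N by apply: bal.
  have rec := @Fc_rec n.+1 m (size B) n1 hb.
  have sV2 : size V2 = (m - size B)%N by rewrite sF eF size_cat; lia.
  split => // W uW sW.
  apply: leq_trans (@upper_bound R n.+1 W n1 uW) _.
  rewrite sW sV2; lia.
Qed.
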